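(* Let $d=3$, $\omega=e^{2\pi i/3}$. Consider phases $\phi_{j,y}\in\mathbb{R}$ ($j,y\in\{0,1,2\}$), considered modulo $2\pi$, with $\phi_{0,y}+\phi_{1,y}+\phi_{2,y}\equiv0 \pmod{2\pi}$ for each $y$, and regard two such families as equivalent if they differ by adding a common multiple of $2\pi/3$ to all of $\phi_{0,1},\phi_{1,1},\phi_{2,1}$ and/or a common multiple of $2\pi/3$ to all of $\phi_{0,2},\phi_{1,2},\phi_{2,2}$ (equivalently, replacing $\overline{B}_1$ by $\omega^a\overline{B}_1$ and $\overline{B}_2$ by $\omega^b\overline{B}_2$). Then the system $\sum_{l=0}^{2}\exp\!\big(i\sum_{m=1}^{n}(\phi_{l\oplus m,y'}-\phi_{l\oplus m,y})\big)=3\delta_{yy'}$ for all $y,y'\in\{0,1,2\}$ and $n\in\{1,2\}$ holds if and only if, up to this equivalence and with $\phi_{0,0},\phi_{1,0}$ arbitrary and $\phi_{2,y}\equiv-\phi_{0,y}-\phi_{1,y}$, one of the following holds: (a) $\phi_{0,1}=\phi_{0,0}-2\pi/3$, $\phi_{1,1}=\phi_{1,0}$, $\phi_{0,2}=\phi_{0,0}-2\pi/3$, $\phi_{1,2}=\phi_{1,0}+2\pi/3$; (b) $\phi_{0,1}=\phi_{0,0}-2\pi/3$, $\phi_{1,1}=\phi_{1,0}+2\pi/3$, $\phi_{0,2}=\phi_{0,0}-2\pi/3$, $\phi_{1,2}=\phi_{1,0}$. In case (a) the corresponding observables are $\overline{B}_0=e^{i\phi_{0,0}}|0\rangle\langle2|+e^{i\phi_{1,0}}|1\rangle\langle0|+e^{-i(\phi_{0,0}+\phi_{1,0})}|2\rangle\langle1|$,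 $\overline{B}_1=\omega^2e^{i\phi_{0,0}}|0\rangle\langle2|+e^{i\phi_{1,0}}|1\rangle\langle0|+\omega e^{-i(\phi_{0,0}+\phi_{1,0})}|2\rangle\langle1|$, $\overline{B}_2=\omega^2e^{i\phi_{0,0}}|0\rangle\langle2|+\omega e^{i\phi_{1,0}}|1\rangle\langle0|+e^{-i(\phi_{0,0}+\phi_{1,0})}|2\rangle\langle1|$.
   Context: $\oplus$ denotes addition modulo 3. For $d=3$ the reference observables are $\overline{B}_y=\sum_{l=0}^{2}e^{i\phi_{l\oplus1,y}}|l+1\rangle\langle l|$ on $\mathbb{C}^3$ (labels mod 3). The displayed system is the orthogonality condition $\sum_{k}(\gamma^{(n)}_{y'k})^*\gamma^{(n)}_{yk}=\delta_{yy'}$ written in terms of the phases. *)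

(* Defs.v *)
From Stdlib Require Import Reals ZArith Arith.
From Coquelicot Require Import Coquelicot.
Open Scope R_scope.

Definition cexpi (t : R) : C := (cos t, sin t).

Definition omega : C := cexpi (2 * PI / 3).

Definition congr2pi (x y : R) : Prop := exists k : Z, x = y + 2 * PI * IZR k.

Definition oplus3 (l m : nat) : nat := ((l + m) mod 3)%nat.

(** Phases phi j y (j, y in {0,1,2}) are encoded as [phi : nat -> nat -> R];
    only the values with j, y < 3 matter. *)

Definition ortho_system (phi : nat -> nat -> R) : Prop :=
  forall (y y' n : nat), (y < 3)%nat -> (y' < 3)%nat -> (n = 1 \/ n = 2)%nat ->
    sum_n (fun l : nat =>
      cexpi (sum_n_m (fun m : nat =>
               phi (oplus3 l m) y' - phi (oplus3 l m) y) 1 n)) 2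
    = (if Nat.eqb y y' then RtoC 3 else RtoC 0).

Definition shift_phases (a b : Z) (phi : nat -> nat -> R) : nat -> nat -> R :=
  fun j y =>
    if Nat.eqb y 1 then phi j y + IZR a * (2 * PI / 3)
    else if Nat.eqb y 2 then phi j y + IZR b * (2 * PI / 3)
    else phi j y.

Definition caseA (phi : nat -> nat -> R) : Prop :=
  congr2pi (phi 0%nat 1%nat) (phi 0%nat 0%nat - 2 * PI / 3) /\
  congr2pi (phi 1%nat 1%nat) (phi 1%nat 0%nat) /\
  congr2pi (phi 0%nat 2%nat) (phi 0%nat 0%nat - 2 * PI / 3) /\
  congr2pi (phi 1%nat 2%nat) (phi 1%nat 0%nat + 2 * PI / 3).

Definition caseB (phi : nat -> nat -> R) : Prop :=
  congr2pi (phi 0%nat 1%nat) (phi 0%nat 0%nat - 2 * PI / 3) /\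
  congr2pi (phi 1%nat 1%nat) (phi 1%nat 0%nat + 2 * PI / 3) /\
  congr2pi (phi 0%nat 2%nat) (phi 0%nat 0%nat - 2 * PI / 3) /\
  congr2pi (phi 1%nat 2%nat) (phi 1%nat 0%nat).

(** Reference observables Bbar_y = sum_{l=0}^{2} e^{i phi_{l+1,y}} |l+1><l|,
    as 3x3 matrices given entrywise (row r, column c), r, c in {0,1,2}. *)
Definition Bbar (phi : nat -> nat -> R) (y : nat) (r c : nat) : C :=
  if Nat.eqb r (oplus3 c 1) then cexpi (phi r y) else RtoC 0.

Definition cyc3 (x u z : C) (r c : nat) : C :=
  match r, c with
  | 0, 2 => x
  | 1, 0 => u
  | 2, 1 => z
  | _, _ => RtoC 0
  end%nat.

(* Main.v *)
Require Import Defs.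
From Stdlib Require Import Reals ZArith Arith Lra Lia.
From Coquelicot Require Import Coquelicot.
Open Scope R_scope.

Definition th := 2 * PI / 3.

Lemma cs_per k : cos (2*PI*IZR k) = 1 /\ sin (2*PI*IZR k) = 0.
Proof.
  assert (H1: sin (IZR k * PI) = 0) by (apply sin_eq_0_1; exists k; reflexivity).
  split.
  - replace (2*PI*IZR k) with (2*(IZR k * PI)) by ring. rewrite cos_2a_sin, H1. ring.
  - apply sin_eq_0_1. exists (2*k)%Z. rewrite mult_IZR. ring.
Qed.

Lemma cexpi_per x k : cexpi (x + 2*PI*IZR k) = cexpi x.
Proof.
  destruct (cs_per k) as [Hc Hs]. unfold cexpi. rewrite cos_plus, sin_plus, Hc, Hs.
  f_equal; ring.
Qed.

Lemma cong_cexpi x y : congr2pi x y -> cexpi x = cexpi y.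
Proof. intros [k ->]. apply cexpi_per. Qed.

Lemma cexpi_inj x y : cexpi x = cexpi y -> congr2pi x y.
Proof.
  unfold cexpi. intros H. injection H as Hc Hs.
  assert (Hcm: cos (x - y) = 1).
  { rewrite cos_minus, Hc, Hs. pose proof (sin2_cos2 y) as Hy. unfold Rsqr in Hy. lra. }
  replace (x - y) with (2 * ((x-y)/2)) in Hcm by field.
  rewrite cos_2a_sin in Hcm.
  assert (Hs0: sin ((x-y)/2) = 0) by nra.
  destruct (sin_eq_0_0 _ Hs0) as [k Hk]. exists k. lra.
Qed.

Lemma cexpi_add x y : cexpi (x + y) = Cmult (cexpi x) (cexpi y).
Proof. unfold cexpi, Cmult. simpl. rewrite cos_plus, sin_plus. f_equal; ring. Qed.

Lemma s3 : sqrt 3 * sqrt 3 = 3.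
Proof. apply sqrt_sqrt; lra. Qed.
Lemma cth : cos th = -1/2.
Proof. unfold th. replace (2*PI/3) with (2*(PI/3)) by field. apply cos_2PI3. Qed.
Lemma sth : sin th = sqrt 3 / 2.
Proof. unfold th. replace (2*PI/3) with (2*(PI/3)) by field. apply sin_2PI3. Qed.
Lemma c2th : cos (2*th) = -1/2.
Proof. unfold th. replace (2*(2*PI/3)) with (PI/3 + PI) by field. rewrite neg_cos, cos_PI3. lra. Qed.
Lemma s2th : sin (2*th) = - (sqrt 3 / 2).
Proof. unfold th. replace (2*(2*PI/3)) with (PI/3 + PI) by field. rewrite neg_sin, sin_PI3. lra. Qed.

Lemma cos_half t : cos t = -1/2 -> congr2pi t th \/ congr2pi t (-th).
Proof.
  intros Hc. pose proof (sin2_cos2 t) as H. unfold Rsqr in H.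
  assert (Hs: (sin t - sqrt 3/2) * (sin t + sqrt 3/2) = 0) by (pose proof s3; nra).
  apply Rmult_integral in Hs as [Hs|Hs].
  - left. apply cexpi_inj. unfold cexpi. rewrite cth, sth. f_equal; lra.
  - right. apply cexpi_inj. unfold cexpi. rewrite cos_neg, sin_neg, cth, sth. f_equal; lra.
Qed.

Lemma mod3_spec x : (x = 3 * (x/3) + x mod 3 /\ 0 <= x mod 3 < 3)%Z.
Proof. split. apply Z.div_mod; lia. apply Z.mod_pos_bound; lia. Qed.

Ltac mod3 := repeat match goal with
  | |- context [ (?x mod 3)%Z ] =>
      let r := fresh "r" in let q := fresh "q" in
      destruct (mod3_spec x); set (r := (x mod 3)%Z) in *; set (q := (x / 3)%Z) in *;
      clearbody r q
  | H : context [ (?x mod 3)%Z ] |- _ =>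
      let r := fresh "r" in let q := fresh "q" in
      destruct (mod3_spec x); set (r := (x mod 3)%Z) in *; set (q := (x / 3)%Z) in *;
      clearbody r q
  end.

Lemma th_cong (A B k : Z) : (A = B + 3*k)%Z -> IZR A * th = IZR B * th + 2*PI*IZR k.
Proof. intros ->. rewrite plus_IZR, mult_IZR. unfold th. field. Qed.

Lemma th_inj (A B k : Z) : IZR A * th = IZR B * th + 2*PI*IZR k -> (A = B + 3*k)%Z.
Proof.
  intros H. apply eq_IZR. rewrite plus_IZR, mult_IZR. unfold th in H.
  pose proof PI_RGT_0.
  apply Rmult_eq_reg_r with (2*PI/3).
  - rewrite H. field.
  - intro. lra.
Qed.

Lemma pairP x y z : cos x + cos y + cos z = 0 -> sin x + sin y + sin z = 0 ->
  exists E, y - x = IZR E * th /\ (E mod 3 = 1 \/ E mod 3 = 2)%Z.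
Proof.
  intros Hc Hs.
  assert (Hcm: cos (y - x) = -1/2).
  { rewrite cos_minus. pose proof (sin2_cos2 x) as Hx. pose proof (sin2_cos2 y) as Hy.
    pose proof (sin2_cos2 z) as Hz.
    unfold Rsqr in *. assert (E1: cos z = -(cos x + cos y)) by lra.
    assert (E2: sin z = -(sin x + sin y)) by lra.
    rewrite E1, E2 in Hz. nra. }
  destruct (cos_half _ Hcm) as [[m Hm]|[m Hm]].
  - exists (1 + 3*m)%Z. split; [|mod3; lia].
    rewrite (th_cong (1+3*m) 1 m) by lia. rewrite Hm. ring.
  - exists (-1 + 3*m)%Z. split; [|mod3; lia].
    rewrite (th_cong (-1+3*m) (-1) m) by lia. rewrite Hm. ring.
Qed.

Lemma keyF d0 d1 d2 : congr2pi (d0+d1+d2) 0 ->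
  cos d0 + cos d1 + cos d2 = 0 -> sin d0 + sin d1 + sin d2 = 0 ->
  exists K0 K1, d0 = IZR K0 * th /\ d1 = IZR K1 * th /\
    ((K1-K0) mod 3 = 1 \/ (K1-K0) mod 3 = 2)%Z.
Proof.
  intros [m Hm] Hc Hs.
  destruct (pairP d0 d1 d2 Hc Hs) as [E1 [H1 M1]].
  destruct (pairP d1 d2 d0) as [E2 [H2 M2]]; [lra|lra|].
  destruct (pairP d0 d2 d1) as [E3 [H3 M3]]; [lra|lra|].
  assert (HE: (E3 = (E1 + E2) + 3*0)%Z).
  { apply th_inj. rewrite plus_IZR. lra. }
  assert (Hqe: exists q, (2*E1+E2 = 3*q)%Z).
  { assert (Hm0 : ((2*E1+E2) mod 3 = 0)%Z) by (clear -M1 M2 M3 HE; mod3; lia).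
    exists ((2*E1+E2)/3)%Z. destruct (mod3_spec (2*E1+E2)). lia. }
  destruct Hqe as [q Hq].
  apply (f_equal IZR) in Hq. rewrite plus_IZR, !mult_IZR in Hq.
  assert (HE3: IZR E3 = IZR E1 + IZR E2) by (rewrite HE, plus_IZR, plus_IZR; simpl; ring).
  assert (Hx: 3*d0 = 2*PI*IZR m - (2*IZR E1 + IZR E2) * th).
  { rewrite HE3 in H3. lra. }
  rewrite Hq in Hx.
  exists (m - q)%Z, (m - q + E1)%Z. split; [|split].
  - rewrite minus_IZR. unfold th in *. lra.
  - rewrite plus_IZR, minus_IZR. unfold th in *. lra.
  - replace (m - q + E1 - (m - q))%Z with E1 by ring. exact M1.
Qed.

Lemma triple x : cos x + cos (x+th) + cos (x+2*th) = 0 /\ sin x + sin (x+th) + sin (x+2*th) = 0.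
Proof.
  rewrite !cos_plus, !sin_plus, cth, sth, c2th, s2th. split; lra.
Qed.

Lemma keyR d0 d1 d2 K0 K1 : congr2pi (d0+d1+d2) 0 -> d0 = IZR K0 * th -> d1 = IZR K1 * th ->
  ((K1-K0) mod 3 = 1 \/ (K1-K0) mod 3 = 2)%Z ->
  cos d0 + cos d1 + cos d2 = 0 /\ sin d0 + sin d1 + sin d2 = 0.
Proof.
  intros [m Hm] H0 H1 Hr0.
  destruct (mod3_spec (K1 - K0)) as [Hd _]. set (q := ((K1-K0)/3)%Z) in *. clearbody q.
  destruct Hr0 as [Hr|Hr]; rewrite Hr in Hd.
  - assert (C1: cexpi d1 = cexpi (d0 + th)).
    { apply cong_cexpi. exists q. rewrite H1, H0.
      rewrite (th_cong K1 (K0+1) q) by lia. rewrite plus_IZR. ring. }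
    assert (C2: cexpi d2 = cexpi (d0 + 2*th)).
    { apply cong_cexpi. pose proof (th_cong (2*K0+K1+2) 0 (K0+1+q)) as Hp.
      specialize (Hp ltac:(lia)).
      exists (m - (K0+1+q))%Z.
      rewrite minus_IZR, !plus_IZR. rewrite !plus_IZR, mult_IZR in Hp. rewrite H0, H1 in Hm.
      lra. }
    unfold cexpi in C1, C2. injection C1 as C1a C1b. injection C2 as C2a C2b.
    rewrite C1a, C1b, C2a, C2b. apply triple.
  - assert (C1: cexpi d1 = cexpi (d0 + 2*th)).
    { apply cong_cexpi. exists q. rewrite H1, H0.
      rewrite (th_cong K1 (K0+2) q) by lia. rewrite plus_IZR. ring. }
    assert (C2: cexpi d2 = cexpi (d0 + th)).
    { apply cong_cexpi. pose proof (th_cong (2*K0+K1+1) 0 (K0+1+q)) as Hp.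
      specialize (Hp ltac:(lia)).
      exists (m - (K0+1+q))%Z.
      rewrite minus_IZR, !plus_IZR. rewrite !plus_IZR, mult_IZR in Hp. rewrite H0, H1 in Hm.
      lra. }
    unfold cexpi in C1, C2. injection C1 as C1a C1b. injection C2 as C2a C2b.
    rewrite C1a, C1b, C2a, C2b. destruct (triple d0). split; lra.
Qed.

Definition dif (phi : nat -> nat -> R) (y y' j : nat) : R := phi j y' - phi j y.

Definition goodR (phi : nat -> nat -> R) y y' : Prop :=
  cos (dif phi y y' 0) + cos (dif phi y y' 1) + cos (dif phi y y' 2) = 0 /\
  sin (dif phi y y' 0) + sin (dif phi y y' 1) + sin (dif phi y y' 2) = 0.

Lemma sumn2 (f : nat -> C) : sum_n f 2 = Cplus (Cplus (f 0%nat) (f 1%nat)) (f 2%nat).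
Proof. rewrite !sum_Sn, sum_O. reflexivity. Qed.
Lemma sumnm12 (g : nat -> R) : sum_n_m g 1 2 = g 1%nat + g 2%nat.
Proof. rewrite sum_n_Sm; [|lia]. rewrite sum_n_n. reflexivity. Qed.
Lemma sumnm11 (g : nat -> R) : sum_n_m g 1 1 = g 1%nat.
Proof. apply sum_n_n. Qed.

Lemma S1_eq phi y y' :
  sum_n (fun l : nat => cexpi (sum_n_m (fun m : nat =>
     phi (oplus3 l m) y' - phi (oplus3 l m) y) 1 1)) 2
  = (cos (dif phi y y' 1) + cos (dif phi y y' 2) + cos (dif phi y y' 0),
     sin (dif phi y y' 1) + sin (dif phi y y' 2) + sin (dif phi y y' 0)).
Proof. rewrite sumn2. rewrite !sumnm11. reflexivity. Qed.

Lemma S2_eq phi y y' :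
  sum_n (fun l : nat => cexpi (sum_n_m (fun m : nat =>
     phi (oplus3 l m) y' - phi (oplus3 l m) y) 1 2)) 2
  = (cos (dif phi y y' 1 + dif phi y y' 2) + cos (dif phi y y' 2 + dif phi y y' 0)
       + cos (dif phi y y' 0 + dif phi y y' 1),
     sin (dif phi y y' 1 + dif phi y y' 2) + sin (dif phi y y' 2 + dif phi y y' 0)
       + sin (dif phi y y' 0 + dif phi y y' 1)).
Proof. rewrite sumn2. rewrite !sumnm12. reflexivity. Qed.

Lemma dif_sum phi y y' :
  congr2pi (phi 0%nat y + phi 1%nat y + phi 2%nat y) 0 ->
  congr2pi (phi 0%nat y' + phi 1%nat y' + phi 2%nat y') 0 ->
  congr2pi (dif phi y y' 0 + dif phi y y' 1 + dif phi y y' 2) 0.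
Proof.
  intros [k Hk] [k' Hk']. exists (k' - k)%Z. rewrite minus_IZR. unfold dif. lra.
Qed.

Lemma cs_comp a b c : congr2pi (a+b+c) 0 -> cos (b+c) = cos a /\ sin (b+c) = - sin a.
Proof.
  intros [k Hk]. assert (H: cexpi (b+c) = cexpi (-a)).
  { apply cong_cexpi. exists k. lra. }
  unfold cexpi in H. injection H as H1 H2. rewrite H1, H2, cos_neg, sin_neg. auto.
Qed.

Lemma goodR_sym phi y y' : goodR phi y y' -> goodR phi y' y.
Proof.
  unfold goodR, dif. intros [H1 H2].
  replace (phi 0%nat y - phi 0%nat y') with (- (phi 0%nat y' - phi 0%nat y)) by ring.
  replace (phi 1%nat y - phi 1%nat y') with (- (phi 1%nat y' - phi 1%nat y)) by ring.
  replace (phi 2%nat y - phi 2%nat y') with (- (phi 2%nat y' - phi 2%nat y)) by ring.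
  rewrite !cos_neg, !sin_neg. split; lra.
Qed.

Lemma ortho_iff phi
  (Hsum : forall y : nat, (y < 3)%nat ->
            congr2pi (phi 0%nat y + phi 1%nat y + phi 2%nat y) 0) :
  ortho_system phi <-> goodR phi 0 1 /\ goodR phi 0 2 /\ goodR phi 1 2.
Proof.
  split.
  - intros H.
    assert (G: forall y y', (y < 3)%nat -> (y' < 3)%nat -> y <> y' -> goodR phi y y').
    { intros y y' Hy Hy' Hne. specialize (H y y' 1%nat Hy Hy' (or_introl eq_refl)).
      rewrite S1_eq in H. apply Nat.eqb_neq in Hne. rewrite Hne in H.
      unfold RtoC in H. injection H as H1 H2. unfold goodR. split; lra. }
    split; [|split]; apply G; lia.
  - intros [G01 [G02 G12]].
    assert (G: forall y y', (y < 3)%nat -> (y' < 3)%nat -> y <> y' -> goodR phi y y').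
    { intros y y' Hy Hy' Hne.
      destruct y as [|[|[|]]]; destruct y' as [|[|[|]]]; try lia;
        auto using goodR_sym. }
    intros y y' n Hy Hy' Hn.
    destruct (Nat.eq_dec y y') as [<-|Hne].
    + rewrite Nat.eqb_refl. unfold dif.
      destruct Hn as [-> | ->]; [rewrite S1_eq | rewrite S2_eq]; unfold dif;
        rewrite !Rminus_diag, ?Rplus_0_l, cos_0, sin_0; unfold RtoC; f_equal; ring.
    + assert (Hne' := Hne). apply Nat.eqb_neq in Hne'. rewrite Hne'.
      destruct (G y y' Hy Hy' Hne) as [Gc Gs].
      pose proof (dif_sum phi y y' (Hsum y Hy) (Hsum y' Hy')) as Hd.
      destruct Hn as [-> | ->].
      * rewrite S1_eq. unfold RtoC. f_equal; lra.
      * rewrite S2_eq.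
        destruct (cs_comp _ _ _ Hd) as [A1 A2].
        assert (Hd2 : congr2pi (dif phi y y' 1 + dif phi y y' 2 + dif phi y y' 0) 0).
        { destruct Hd as [k Hk]. exists k. lra. }
        destruct (cs_comp _ _ _ Hd2) as [B1 B2].
        assert (Hd3 : congr2pi (dif phi y y' 2 + dif phi y y' 0 + dif phi y y' 1) 0).
        { destruct Hd as [k Hk]. exists k. lra. }
        destruct (cs_comp _ _ _ Hd3) as [C1 C2].
        rewrite A1, A2, B1, B2, C1, C2. unfold RtoC. f_equal; lra.
Qed.

Lemma cong_helper x y t (A a K k : Z) : x - y = IZR A * th -> t = y + IZR K * th ->
  (A + a = K + 3*k)%Z -> congr2pi (x + IZR a * (2*PI/3)) t.
Proof.
  intros H1 H2 H3. exists k. rewrite H2. apply th_cong in H3. rewrite plus_IZR in H3.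
  fold th. lra.
Qed.

Lemma cong_mult x y t (K a : Z) : congr2pi (x + IZR a*(2*PI/3)) t -> t = y + IZR K * th ->
  exists A k, x - y = IZR A * th /\ (A + a = K + 3*k)%Z.
Proof.
  intros [k Hk] Ht. exists (K + 3*k - a)%Z, k. split; [|lia].
  rewrite minus_IZR, plus_IZR, mult_IZR. rewrite Ht in Hk. unfold th in *. lra.
Qed.

Lemma dif12 phi j : dif phi 1 2 j = dif phi 0 2 j - dif phi 0 1 j.
Proof. unfold dif. ring. Qed.

Lemma C_eq phi j (A B C : Z) : dif phi 0 1 j = IZR A * th -> dif phi 0 2 j = IZR B * th ->
  dif phi 1 2 j = IZR C * th -> C = (B - A)%Z.
Proof.
  intros HA HB HC. rewrite dif12, HA, HB in HC.
  assert (E: (C = (B - A) + 3*0)%Z) by (apply th_inj; rewrite minus_IZR; lra). lia.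
Qed.

Theorem mainTheorem10 (phi : nat -> nat -> R)
  (Hsum : forall y : nat, (y < 3)%nat ->
            congr2pi (phi 0%nat y + phi 1%nat y + phi 2%nat y) 0) :
  (ortho_system phi <->
     exists a b : Z,
       caseA (shift_phases a b phi) \/ caseB (shift_phases a b phi))
  /\
  (forall a b : Z, caseA (shift_phases a b phi) ->
     let p00 := phi 0%nat 0%nat in
     let p10 := phi 1%nat 0%nat in
     forall r c : nat, (r < 3)%nat -> (c < 3)%nat ->
       Bbar (shift_phases a b phi) 0 r c
         = cyc3 (cexpi p00) (cexpi p10) (cexpi (- (p00 + p10))) r c /\
       Bbar (shift_phases a b phi) 1 r c
         = cyc3 (Cmult (Cmult omega omega) (cexpi p00)) (cexpi p10)
                (Cmult omega (cexpi (- (p00 + p10)))) r c /\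
       Bbar (shift_phases a b phi) 2 r c
         = cyc3 (Cmult (Cmult omega omega) (cexpi p00)) (Cmult omega (cexpi p10))
                (cexpi (- (p00 + p10))) r c).
Proof.
  pose proof (dif_sum phi 0 1 (Hsum 0%nat ltac:(lia)) (Hsum 1%nat ltac:(lia))) as D01.
  pose proof (dif_sum phi 0 2 (Hsum 0%nat ltac:(lia)) (Hsum 2%nat ltac:(lia))) as D02.
  pose proof (dif_sum phi 1 2 (Hsum 1%nat ltac:(lia)) (Hsum 2%nat ltac:(lia))) as D12.
  split.
  - rewrite (ortho_iff phi Hsum). split.
    + intros [[G01c G01s] [[G02c G02s] [G12c G12s]]].
      destruct (keyF _ _ _ D01 G01c G01s) as [A0 [A1 [HA0 [HA1 MA]]]].
      destruct (keyF _ _ _ D02 G02c G02s) as [B0 [B1 [HB0 [HB1 MB]]]].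
      destruct (keyF _ _ _ D12 G12c G12s) as [C0 [C1 [HC0 [HC1 MC]]]].
      pose proof (C_eq phi 0 A0 B0 C0 HA0 HB0 HC0) as EC0.
      pose proof (C_eq phi 1 A1 B1 C1 HA1 HB1 HC1) as EC1.
      subst C0 C1.
      destruct MA as [MA|MA].
      * assert (MB2 : ((B1 - B0) mod 3 = 2)%Z) by (clear -MA MB MC; mod3; lia).
        exists (-1 - A0)%Z, (-1 - B0)%Z. left.
        unfold caseA, shift_phases; cbn [Nat.eqb].
        split; [|split; [|split]].
        -- apply (cong_helper (phi 0%nat 1%nat) (phi 0%nat 0%nat) _ A0 _ (-1) 0); [exact HA0 | unfold th; ring | lia].
        -- apply (cong_helper (phi 1%nat 1%nat) (phi 1%nat 0%nat) _ A1 _ 0 ((A1-A0)/3)); [exact HA1 | unfold th; ring |].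
           clear -MA. mod3. lia.
        -- apply (cong_helper (phi 0%nat 2%nat) (phi 0%nat 0%nat) _ B0 _ (-1) 0); [exact HB0 | unfold th; ring | lia].
        -- apply (cong_helper (phi 1%nat 2%nat) (phi 1%nat 0%nat) _ B1 _ 1 ((B1-B0)/3)); [exact HB1 | unfold th; ring |].
           clear -MB2. mod3. lia.
      * assert (MB2 : ((B1 - B0) mod 3 = 1)%Z) by (clear -MA MB MC; mod3; lia).
        exists (-1 - A0)%Z, (-1 - B0)%Z. right.
        unfold caseB, shift_phases; cbn [Nat.eqb].
        split; [|split; [|split]].
        -- apply (cong_helper (phi 0%nat 1%nat) (phi 0%nat 0%nat) _ A0 _ (-1) 0); [exact HA0 | unfold th; ring | lia].
        -- apply (cong_helper (phi 1%nat 1%nat) (phi 1%nat 0%nat) _ A1 _ 1 ((A1-A0)/3)); [exact HA1 | unfold th; ring |].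
           clear -MA. mod3. lia.
        -- apply (cong_helper (phi 0%nat 2%nat) (phi 0%nat 0%nat) _ B0 _ (-1) 0); [exact HB0 | unfold th; ring | lia].
        -- apply (cong_helper (phi 1%nat 2%nat) (phi 1%nat 0%nat) _ B1 _ 0 ((B1-B0)/3)); [exact HB1 | unfold th; ring |].
           clear -MB2. mod3. lia.
    + intros [a [b [HA|HB]]].
      * unfold caseA, shift_phases in HA; cbn [Nat.eqb] in HA.
        destruct HA as [H1 [H2 [H3 H4]]].
        destruct (cong_mult _ (phi 0%nat 0%nat) _ (-1) a H1) as [A0 [k1 [HA0 EA0]]]; [unfold th; ring|].
        destruct (cong_mult _ (phi 1%nat 0%nat) _ 0 a H2) as [A1 [k2 [HA1 EA1]]]; [unfold th; ring|].
        destruct (cong_mult _ (phi 0%nat 0%nat) _ (-1) b H3) as [B0 [k3 [HB0 EB0]]]; [unfold th; ring|].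
        destruct (cong_mult _ (phi 1%nat 0%nat) _ 1 b H4) as [B1 [k4 [HB1 EB1]]]; [unfold th; ring|].
        assert (HC0 : dif phi 1 2 0 = IZR (B0 - A0) * th).
        { rewrite dif12, minus_IZR. unfold dif. lra. }
        assert (HC1 : dif phi 1 2 1 = IZR (B1 - A1) * th).
        { rewrite dif12, minus_IZR. unfold dif. lra. }
        split; [|split].
        -- eapply keyR; [exact D01|exact HA0|exact HA1|]. left. clear -EA0 EA1. mod3. lia.
        -- eapply keyR; [exact D02|exact HB0|exact HB1|]. right. clear -EB0 EB1. mod3. lia.
        -- eapply keyR; [exact D12|exact HC0|exact HC1|]. left. clear -EA0 EA1 EB0 EB1. mod3. lia.
      * unfold caseB, shift_phases in HB; cbn [Nat.eqb] in HB.
        destruct HB as [H1 [H2 [H3 H4]]].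
        destruct (cong_mult _ (phi 0%nat 0%nat) _ (-1) a H1) as [A0 [k1 [HA0 EA0]]]; [unfold th; ring|].
        destruct (cong_mult _ (phi 1%nat 0%nat) _ 1 a H2) as [A1 [k2 [HA1 EA1]]]; [unfold th; ring|].
        destruct (cong_mult _ (phi 0%nat 0%nat) _ (-1) b H3) as [B0 [k3 [HB0 EB0]]]; [unfold th; ring|].
        destruct (cong_mult _ (phi 1%nat 0%nat) _ 0 b H4) as [B1 [k4 [HB1 EB1]]]; [unfold th; ring|].
        assert (HC0 : dif phi 1 2 0 = IZR (B0 - A0) * th).
        { rewrite dif12, minus_IZR. unfold dif. lra. }
        assert (HC1 : dif phi 1 2 1 = IZR (B1 - A1) * th).
        { rewrite dif12, minus_IZR. unfold dif. lra. }
        split; [|split].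
        -- eapply keyR; [exact D01|exact HA0|exact HA1|]. right. clear -EA0 EA1. mod3. lia.
        -- eapply keyR; [exact D02|exact HB0|exact HB1|]. left. clear -EB0 EB1. mod3. lia.
        -- eapply keyR; [exact D12|exact HC0|exact HC1|]. right. clear -EA0 EA1 EB0 EB1. mod3. lia.
  - intros a b HA p00 p10 r c Hr Hc.
    unfold caseA, shift_phases in HA; cbn [Nat.eqb] in HA.
    destruct HA as [[k1 H1] [[k2 H2] [[k3 H3] [k4 H4]]]].
    destruct (Hsum 0%nat ltac:(lia)) as [s0 S0].
    destruct (Hsum 1%nat ltac:(lia)) as [s1 S1].
    destruct (Hsum 2%nat ltac:(lia)) as [s2 S2].
    assert (E20 : cexpi (phi 2%nat 0%nat) = cexpi (- (p00 + p10))).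
    { apply cong_cexpi. exists s0. unfold p00, p10. lra. }
    assert (E01 : cexpi (phi 0%nat 1%nat + IZR a * (2*PI/3)) = Cmult (Cmult omega omega) (cexpi p00)).
    { rewrite H1. rewrite cexpi_per.
      rewrite (cong_cexpi (phi 0%nat 0%nat - 2*PI/3) (th + th + phi 0%nat 0%nat)).
      - rewrite !cexpi_add. reflexivity.
      - exists (-1)%Z. unfold th, p00. lra. }
    assert (E11 : cexpi (phi 1%nat 1%nat + IZR a * (2*PI/3)) = cexpi p10).
    { rewrite H2. apply cexpi_per. }
    assert (E21 : cexpi (phi 2%nat 1%nat + IZR a * (2*PI/3)) = Cmult omega (cexpi (- (p00 + p10)))).
    { rewrite (cong_cexpi _ (th + - (p00 + p10))).
      - rewrite cexpi_add. reflexivity.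
      - exists (s1 - k1 - k2 + a)%Z. rewrite !plus_IZR, !minus_IZR. unfold th, p00, p10 in *. lra. }
    assert (E02 : cexpi (phi 0%nat 2%nat + IZR b * (2*PI/3)) = Cmult (Cmult omega omega) (cexpi p00)).
    { rewrite H3. rewrite cexpi_per.
      rewrite (cong_cexpi (phi 0%nat 0%nat - 2*PI/3) (th + th + phi 0%nat 0%nat)).
      - rewrite !cexpi_add. reflexivity.
      - exists (-1)%Z. unfold th, p00. lra. }
    assert (E12 : cexpi (phi 1%nat 2%nat + IZR b * (2*PI/3)) = Cmult omega (cexpi p10)).
    { rewrite H4. rewrite cexpi_per. rewrite (Rplus_comm (phi 1%nat 0%nat)), cexpi_add. reflexivity. }
    assert (E22 : cexpi (phi 2%nat 2%nat + IZR b * (2*PI/3)) = cexpi (- (p00 + p10))).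
    { apply cong_cexpi.
      exists (s2 - k3 - k4 + b)%Z. rewrite !plus_IZR, !minus_IZR. unfold th, p00, p10 in *. lra. }
    unfold Bbar, shift_phases, cyc3.
    destruct r as [|[|[|r]]]; try lia; destruct c as [|[|[|c]]]; try lia;
      cbn [oplus3 Nat.eqb Nat.add Nat.modulo Nat.divmod fst snd]; repeat split; auto.
Qed.
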